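(* Let $K$ be a field and $L$ a finite extension of $K$ of degree $n$. Let $(x_1,\dots,x_k)$ and $(y_1,\dots,y_\ell)$ be two $K$-linearly independent families of elements of $L$, and suppose $k+\ell\geqslant n+1$. Then the set $\{x_iy_j\ ;\ 1\leqslant i\leqslant k,\ 1\leqslant j\leqslant\ell\}$ spans $L$ as a $K$-vector space. *)

(* Defs.v *)
From HB Require Import structures.
From mathcomp Require Import all_boot all_order all_algebra all_field.
Set Implicit Arguments. Unset Strict Implicit. Unset Printing Implicit Defensive.

(* Main.v *)
Require Import Defs.
From HB Require Import structures.
From mathcomp Require Import all_boot all_order all_algebra all_field.
Import GRing.Theory.
Local Open Scope ring_scope.
Local Open Scope vspace_scope.

Lemma span_van (K : fieldType) (L : fieldExtType K) m (e : m.-tuple L) i0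
   (a : L) (X : seq L) :
  (forall w, w \in X -> coord e i0 (a * w) = 0%R) ->
  forall v, v \in <<X>> -> coord e i0 (a * v) = 0%R.
Proof.
move=> H v vX; rewrite (@coord_span _ _ _ (in_tuple X) v vX).
rewrite mulr_sumr linear_sum big1 // => j _.
by rewrite -scalerAr linearZ /= H ?mulr0 // mem_nth // size_tuple.
Qed.

Theorem mainTheorem3 (K : fieldType) (L : fieldExtType K) (n k l : nat)
    (x : k.-tuple L) (y : l.-tuple L) :
  \dim {:L} = n ->
  free x -> free y ->
  (n.+1 <= k + l)%N ->
  <<[seq (xi * yj)%R | xi <- x, yj <- y]>>%VS = fullv.
Proof.
move=> dimL fx fy hkl.
set S := <<_>>.
apply/eqP; rewrite eqEsubv subvf /=; apply/negPn/negP => nS.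
have [c _ cS] : exists2 c, c \in vbasis (fullv : {vspace L}) & c \notin S.
  apply/allPn; apply: contra nS => /allP H.
  rewrite -(span_basis (vbasisP fullv)); apply/span_subvP => w /H //.
set sb := vbasis S.
pose e := [tuple of c :: sb].
have fe : free e by rewrite /= free_cons (span_basis (vbasisP S)) cS (basis_free (vbasisP S)).
pose phi := coord e ord0.
have phiS : forall v, v \in S -> phi v = 0%R.
  move=> v vS; rewrite -[v]mul1r; apply: (@span_van _ _ _ e ord0 1%R sb) => [w wsb|].
    rewrite mul1r; have hi := wsb; rewrite -index_mem size_tuple in hi.
    rewrite -(nth_index 0%R wsb) /phi.
    have -> : nth 0%R sb (index w sb) = e`_(Ordinal (hi : (index w sb).+1 < (\dim S).+1)%N).
      by [].
    rewrite coord_free //.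
  by rewrite (span_basis (vbasisP S)).
have phic : phi c = 1%R.
  by have := coord_free ord0 ord0 fe; rewrite eqxx.
set Z := <<y>>^C.
set z := vbasis Z.
have dimy : \dim <<y>> = l by move/eqP: fy; rewrite size_tuple.
have dimx : \dim <<x>> = k by move/eqP: fx; rewrite size_tuple.
have dimZ : \dim Z = (n - l)%N by rewrite /Z dimv_compl dimL dimy.
have fz : free z by apply: basis_free; apply: vbasisP.
pose T (a : L) := (\sum_(i < \dim Z) phi (a * z`_i) *: z`_i)%R.
have key : forall a : L, a \in <<x>> -> T a = 0%R -> a = 0%R.
  move=> a ax Ta0.
  have hz : forall i : 'I_(\dim Z), phi (a * z`_i)%R = 0%R.
    move=> i; have := coord_sum_free (fun i => phi (a * z`_i)%R) i fz.
    by rewrite -/(T a) Ta0 linear0.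
  have hy : forall w, w \in y -> phi (a * w)%R = 0%R.
    move=> w wy; apply: phiS.
    rewrite (coord_span ax) mulr_suml; apply: memv_suml => i _.
    rewrite -scalerAl; apply: memvZ; apply: memv_span.
    apply/allpairsP; exists (x`_i, w) => /=; split => //.
    by rewrite mem_nth // size_tuple.
  have hall : forall b : L, phi (a * b)%R = 0%R.
    move=> b; have : b \in (<<y>> + Z)%VS by rewrite addv_complf memvf.
    case/memv_addP => u uy [v vZ ->]; rewrite /phi mulrDr linearD /=.
    rewrite (@span_van _ _ _ e ord0 a y hy u uy) add0r.
    apply: (@span_van _ _ _ e ord0 a z); last by rewrite (span_basis (vbasisP Z)).
    move=> w wz; have hi := wz; rewrite -index_mem size_tuple in hi.
    rewrite -(nth_index 0%R wz).
    have -> : nth 0%R z (index w z) = z`_(Ordinal (hi : (index w z) < \dim Z)%N).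
      by [].
    exact: hz.
  apply/eqP; apply/negPn/negP => a0.
  by have := hall (a^-1 * c)%R; rewrite mulrA mulfV // mul1r phic => /eqP; rewrite oner_eq0.
pose xt := map_tuple T x.
have fxt : free xt.
  apply/freeP => cc Hc i.
  pose a := (\sum_(j < k) cc j *: x`_j)%R.
  have Ta : T a = (\sum_(j < k) cc j *: xt`_j)%R.
    rewrite /T /a /phi.
    under eq_bigr => i0 _ do rewrite mulr_suml linear_sum /= scaler_suml.
    rewrite exchange_big /=; apply: eq_bigr => j _.
    rewrite (nth_map 0%R) ?size_tuple // /T scaler_sumr; apply: eq_bigr => i0 _.
    by rewrite -scalerAl linearZ /= scalerA.
  have a0 : a = 0%R.
    apply: key; last by rewrite Ta.
    apply: memv_suml => j _; apply: memvZ; apply: memv_span.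
    by rewrite mem_nth // size_tuple.
  by move/freeP: fx => /(_ cc a0 i).
have : (\dim <<xt>> <= \dim Z)%N.
  apply: dimvS; apply/span_subvP => w /mapP [a _ ->].
  apply: memv_suml => i _; apply: memvZ; rewrite vbasis_mem // mem_nth //.
  by rewrite size_tuple.
move/eqP: fxt; rewrite size_tuple => ->; rewrite dimZ.
have : (\dim <<y>> <= \dim {:L})%N by apply: dimvS; apply: subvf.
rewrite dimy dimL => hl hk.
move: hkl; rewrite ltnNge => /negP; apply.
by move: hk; rewrite -(leq_add2r l) (subnK hl).
Qed.
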